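(* Let $(V,d)$ be a finite metric space with root $r\in V$ and let $\pi$ be any master tour on $(V,d)$. Let $\{q_v\}_{v\in V}$ and $\{\bar p_v\}_{v\in V}$ be probabilities in $[0,1]$ and let $\beta\le 1$ be a constant such that $\beta\bar p_v\le q_v\le\bar p_v$ for each $v\in V$. Then the expected latency of $\pi$ under probabilities $\{q_v\}_{v\in V}$ is at least $\beta^3$ times the expected latency of $\pi$ under probabilities $\{\bar p_v\}_{v\in V}$.
   Context: A master tour $\pi$ is a tour starting at the root $r$ visiting all vertices of $V$. For an active set $A\subseteq V$, $\pi_A$ visits the vertices of $A$ starting from $r$ in the order of $\pi$ (shortcutting inactive vertices); the latency of $v\in A$ is the length of the path from $r$ to $v$ along $\pi_A$. The expected latency of $\pi$ under probabilities $\{x_v\}$ is $\mathbb{E}_A[\sum_{v\in A}(\text{latency of }v\text{ in }\pi_A)]$ where $A$ contains each $v$ independently with probability $x_v$. *)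

(* Defs.v *)
From mathcomp Require Import all_boot all_order all_algebra.
Set Implicit Arguments. Unset Strict Implicit. Unset Printing Implicit Defensive.
Import Order.TTheory GRing.Theory Num.Theory.
Local Open Scope ring_scope.

Section Latency.
Variables (R : realFieldType) (V : finType).

Definition is_metric (d : V -> V -> R) : Prop :=
  [/\ forall x y, d x y = 0 <-> x = y,
      forall x y, d x y = d y x &
      forall x y z, d x z <= d x y + d y z].

Fixpoint path_len (d : V -> V -> R) (x : V) (s : seq V) : R :=
  if s is y :: s' then d x y + path_len d y s' else 0.

Definition master_tour (r : V) (pi : seq V) : Prop :=
  [/\ uniq pi, forall v : V, v \in pi & head r pi = r].

Definition sub_tour (pi : seq V) (A : {set V}) : seq V :=
  [seq v <- pi | v \in A].

Definition latency (d : V -> V -> R) (r : V) (pi : seq V) (A : {set V}) (v : V) : R :=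
  let s := sub_tour pi A in path_len d r (take (index v s).+1 s).

(* probability of active set A when each v is active independently w.p. x v *)
Definition set_prob (x : V -> R) (A : {set V}) : R :=
  \prod_(v in A) x v * \prod_(v in ~: A) (1 - x v).

Definition exp_latency (d : V -> V -> R) (r : V) (pi : seq V) (x : V -> R) : R :=
  \sum_(A : {set V}) set_prob x A * \sum_(v in A) latency d r pi A v.

End Latency.

(* Main.v *)
Require Import Defs.
From mathcomp Require Import all_boot all_order all_algebra.
From mathcomp Require Import ring lra.
Set Implicit Arguments. Unset Strict Implicit. Unset Printing Implicit Defensive.
Import Order.TTheory GRing.Theory Num.Theory.
Local Open Scope ring_scope.

Section Aux.
Variables (R : realFieldType) (V : finType).
Implicit Types (A : {set V}) (s : seq V).

Definition Ex (p : V -> R) (f : {set V} -> R) := \sum_(A : {set V}) set_prob p A * f A.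

Definition pf (p : V -> R) A v := if v \in A then p v else 1 - p v.

Lemma set_probE p A : set_prob p A = \prod_(v : V) pf p A v.
Proof.
rewrite /set_prob /pf (bigID (mem A) predT) /=.
congr (_ * _).
- by apply: eq_bigr => v /= ->.
- rewrite [RHS](eq_bigr (fun v => 1 - p v)); last by move=> v /negbTE ->.
  by apply: eq_bigl => v; rewrite inE.
Qed.

Lemma Ex1 p : Ex p (fun _ => 1) = 1.
Proof.
rewrite /Ex.
transitivity (\prod_(v : V) \sum_(b : bool) (if b then p v else 1 - p v)); last first.
  by rewrite big1 // => v _; rewrite big_bool /= addrC subrK.
rewrite bigA_distr_bigA /=.
rewrite (reindex (fun f : {ffun V -> bool} => [set v | f v])); last first.
  exists (fun A : {set V} => [ffun v => v \in A]) => f _.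
    by apply/ffunP => v; rewrite ffunE inE.
  by apply/setP => v; rewrite inE ffunE.
apply: eq_bigr => f _; rewrite mulr1 set_probE.
by apply: eq_bigr => v _; rewrite /pf inE.
Qed.

Lemma ExD p f g : Ex p (fun A => f A + g A) = Ex p f + Ex p g.
Proof. by rewrite /Ex -big_split; apply: eq_bigr => A _; rewrite mulrDr. Qed.

Lemma ExZ p c f : Ex p (fun A => c * f A) = c * Ex p f.
Proof. by rewrite /Ex mulr_sumr; apply: eq_bigr => A _; rewrite mulrCA. Qed.

Lemma sumsplit (w : V) (F : {set V} -> R) :
  \sum_(A : {set V}) F A = \sum_(A : {set V} | w \notin A) (F (w |: A) + F A).
Proof.
rewrite big_split /= [LHS](bigID (fun A => w \in A)) /=; congr (_ + _).
rewrite (reindex_onto (fun A => w |: A) (fun A => A :\ w)); last first.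
  by move=> A HA; rewrite setD1K.
apply: eq_bigl => A; rewrite setU11 /=.
case: (boolP (w \in A)) => Hw.
  apply/negbTE; apply/eqP => E; move: Hw; rewrite -E.
  by rewrite !inE eqxx.
by rewrite setU1K // eqxx.
Qed.

Lemma Ex_split p (w : V) (h1 h0 : {set V} -> R) :
  (forall A, h1 (A :\ w) = h1 A) -> (forall A, h0 (A :\ w) = h0 A) ->
  Ex p (fun A => if w \in A then h1 A else h0 A) = p w * Ex p h1 + (1 - p w) * Ex p h0.
Proof.
move=> H1 H0.
pose rest A := \prod_(v | v != w) pf p A v.
have sp A : set_prob p A = pf p A w * rest A by rewrite set_probE (bigD1 w).
have rK A : w \notin A -> rest (w |: A) = rest A.
  move=> _; apply: eq_bigr => v Hv; rewrite /pf !inE (negbTE Hv) //.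
have h1K A : w \notin A -> h1 (w |: A) = h1 A.
  by move=> Hw; rewrite -H1 setU1K.
have h0K A : w \notin A -> h0 (w |: A) = h0 A.
  by move=> Hw; rewrite -H0 setU1K.
rewrite /Ex (sumsplit w) (sumsplit w (fun A => set_prob p A * h1 A))
  (sumsplit w (fun A => set_prob p A * h0 A)) !mulr_sumr -big_split /=.
apply: eq_bigr => A Hw.
rewrite !sp rK // h1K // h0K // /pf setU11 (negbTE Hw).
ring.
Qed.

Variable d : V -> V -> R.

Fixpoint cnt s A : R := if s is w :: s' then (w \in A)%:R + cnt s' A else 0.
Fixpoint Lr (x0 : V) s A : R :=
  if s is w :: s' then (if w \in A then d x0 w * (1 + cnt s' A) else Lr x0 s' A) else 0.
Fixpoint Hr s A : R :=
  if s is w :: s' then (if w \in A then Lr w s' A + Hr s' A else Hr s' A) else 0.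
Definition G (x0 : V) s A :=
  let t := [seq v <- s | v \in A] in
  \sum_(v <- t) path_len d x0 (take (index v t).+1 t).

Lemma cntE s A : cnt s A = (count (mem A) s)%:R.
Proof. by elim: s => //= w s ->; rewrite natrD. Qed.

Lemma sum_const_seq (t : seq V) (c : R) : \sum_(v <- t) c = c * (size t)%:R.
Proof.
elim: t => [|v t IH]; first by rewrite big_nil mulr0.
by rewrite big_cons IH /= -addn1 natrD; ring.
Qed.

Lemma G_LH x0 s A : uniq s -> G x0 s A = Lr x0 s A + Hr s A.
Proof.
elim: s x0 => [|w s IH] x0 /=; first by rewrite /G /= big_nil addr0.
case/andP => ws us.
rewrite /G /=; case: ifP => wA; last by rewrite -IH.
rewrite big_cons /= eqxx /=.
set t := [seq v <- s | v \in A].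
rewrite (eq_big_seq (fun v => d x0 w + path_len d w (take (index v t).+1 t))); last first.
  move=> v; rewrite mem_filter => /andP[_ vs].
  have -> : (w == v) = false by apply/negbTE; apply: contraNneq ws => ->.
  by [].
rewrite big_split /= sum_const_seq -IH // take0 /= addr0 cntE /G -/t.
rewrite (_ : size t = count (mem A) s); last by rewrite size_filter.
ring.
Qed.


Lemma cnt_D1 s w A : w \notin s -> cnt s (A :\ w) = cnt s A.
Proof.
elim: s => //= v s IH; rewrite inE negb_or => /andP[wv ws].
by rewrite IH // !inE eq_sym (negbTE wv).
Qed.

Lemma Lr_D1 x0 s w A : w \notin s -> Lr x0 s (A :\ w) = Lr x0 s A.
Proof.
elim: s x0 => //= v s IH x0; rewrite inE negb_or => /andP[wv ws].
by rewrite IH // cnt_D1 // !inE eq_sym (negbTE wv).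
Qed.

Lemma Hr_D1 s w A : w \notin s -> Hr s (A :\ w) = Hr s A.
Proof.
elim: s => //= v s IH; rewrite inE negb_or => /andP[wv ws].
by rewrite IH // Lr_D1 // !inE eq_sym (negbTE wv).
Qed.

Fixpoint Nf (p : V -> R) s : R := if s is w :: s' then p w + Nf p s' else 0.
Fixpoint Lf (p : V -> R) (x0 : V) s : R :=
  if s is w :: s' then p w * (d x0 w * (1 + Nf p s')) + (1 - p w) * Lf p x0 s' else 0.
Fixpoint Hf (p : V -> R) s : R :=
  if s is w :: s' then p w * Lf p w s' + Hf p s' else 0.

Lemma Ex0 p : Ex p (fun _ => 0) = 0.
Proof. by rewrite /Ex big1 // => A _; rewrite mulr0. Qed.

Lemma Ex_cnt p s : uniq s -> Ex p (cnt s) = Nf p s.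
Proof.
elim: s => [|w s IH] /=; first by move=> _; rewrite Ex0.
case/andP => ws us.
have -> : Ex p (cnt (w :: s)) = Ex p (fun A => if w \in A then 1 + cnt s A else cnt s A).
  by apply: eq_bigr => A _ /=; case: (w \in A); rewrite ?add0r.
rewrite Ex_split; last 2 first.
- by move=> A; rewrite cnt_D1.
- by move=> A; rewrite cnt_D1.
rewrite ExD Ex1 IH //; ring.
Qed.

Lemma Ex_Lr p x0 s : uniq s -> Ex p (Lr x0 s) = Lf p x0 s.
Proof.
elim: s x0 => [|w s IH] x0 /=; first by move=> _; rewrite Ex0.
case/andP => ws us.
rewrite (@Ex_split p w (fun A => d x0 w * (1 + cnt s A)) (Lr x0 s)); last 2 first.
- by move=> A; rewrite cnt_D1.
- by move=> A; rewrite Lr_D1.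
by rewrite ExZ ExD Ex1 Ex_cnt // IH.
Qed.

Lemma Ex_Hr p s : uniq s -> Ex p (Hr s) = Hf p s.
Proof.
elim: s => [|w s IH] /=; first by move=> _; rewrite Ex0.
case/andP => ws us.
rewrite (@Ex_split p w (fun A => Lr w s A + Hr s A) (Hr s)); last 2 first.
- by move=> A; rewrite Lr_D1 // Hr_D1.
- by move=> A; rewrite Hr_D1.
rewrite ExD Ex_Lr // IH //; ring.
Qed.

End Aux.

Section Ineq.
Variables (R : realFieldType) (V : finType) (d : V -> V -> R).
Variables (p q : V -> R) (b : R).
Hypothesis d0 : forall x y, 0 <= d x y.
Hypothesis p01 : forall v, 0 <= p v <= 1.
Hypothesis q01 : forall v, 0 <= q v <= 1.
Hypothesis b0 : 0 <= b.
Hypothesis b1 : b <= 1.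
Hypothesis bpq : forall v, b * p v <= q v <= p v.

Lemma Nf_ge0 s : 0 <= Nf p s.
Proof. elim: s => //= w s IH; apply: addr_ge0 => //; by case/andP: (p01 w). Qed.

Lemma Nf_le s : b * (1 + Nf p s) <= 1 + Nf q s.
Proof.
elim: s => [|w s IH] /=; first by rewrite !addr0 mulr1.
have [h1 _] := andP (bpq w).
rewrite addrCA mulrDr [1 + (_ + _)]addrCA; apply: lerD => //.
Qed.

Lemma Lf_ge0 x0 s : 0 <= Lf d p x0 s.
Proof.
elim: s x0 => //= w s IH x0; have [h0 h1] := andP (p01 w).
apply: addr_ge0; apply: mulr_ge0 => //; last by rewrite subr_ge0.
apply: mulr_ge0 => //; apply: addr_ge0 => //; exact: Nf_ge0.
Qed.

Lemma Lf_le x0 s : b ^+ 2 * Lf d p x0 s <= Lf d q x0 s.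
Proof.
elim: s x0 => [|w s IH] x0 /=; first by rewrite mulr0.
have [hp0 hp1] := andP (p01 w); have [hb hq] := andP (bpq w).
rewrite mulrDr; apply: lerD.
- rewrite (_ : b ^+ 2 * (p w * (d x0 w * (1 + Nf p s))) =
      (b * p w) * (d x0 w * (b * (1 + Nf p s)))); last by ring.
  apply: ler_pM => //; first exact: mulr_ge0.
    apply: mulr_ge0 => //; apply: mulr_ge0 => //; apply: addr_ge0 => //; exact: Nf_ge0.
  apply: ler_wpM2l => //; exact: Nf_le.
- rewrite mulrCA; apply: ler_pM => //; first by rewrite subr_ge0.
    apply: mulr_ge0; [exact: exprn_ge0 | exact: Lf_ge0].
  by apply: lerB.
Qed.

Lemma Hf_ge0 s : 0 <= Hf d p s.
Proof.
elim: s => //= w s IH; apply: addr_ge0 => //; apply: mulr_ge0; last exact: Lf_ge0.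
by case/andP: (p01 w).
Qed.

Lemma Hf_le s : b ^+ 3 * Hf d p s <= Hf d q s.
Proof.
elim: s => [|w s IH] /=; first by rewrite mulr0.
have [hp0 hp1] := andP (p01 w); have [hb hq] := andP (bpq w).
rewrite mulrDr; apply: lerD => //.
rewrite (_ : b ^+ 3 * (p w * Lf d p w s) = (b * p w) * (b ^+ 2 * Lf d p w s)); last by ring.
apply: ler_pM => //; first exact: mulr_ge0.
  apply: mulr_ge0; [exact: exprn_ge0 | exact: Lf_ge0].
exact: Lf_le.
Qed.

End Ineq.

Lemma exp_latencyE (R : realFieldType) (V : finType) (d : V -> V -> R) (r : V)
  (pi : seq V) (x : V -> R) :
  uniq pi -> (forall v : V, v \in pi) ->
  exp_latency d r pi x = Lf d x r pi + Hf d x pi.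
Proof.
move=> upi allpi.
rewrite -Ex_Lr // -Ex_Hr // -ExD /exp_latency /Ex.
apply: eq_bigr => A _; congr (_ * _); rewrite -G_LH //.
rewrite /G /latency /sub_tour /= big_filter.
rewrite (perm_big pi); first by [].
apply: uniq_perm => //; first exact: index_enum_uniq.
by move=> v; rewrite mem_index_enum allpi.
Qed.

Theorem lemma3 (R : realFieldType) (V : finType) (d : V -> V -> R) (r : V)
    (pi : seq V) (q pbar : V -> R) (beta : R) :
  is_metric d -> master_tour r pi ->
  (forall v, 0 <= q v <= 1) -> (forall v, 0 <= pbar v <= 1) ->
  beta <= 1 ->
  (forall v, beta * pbar v <= q v <= pbar v) ->
  exp_latency d r pi q >= beta ^+ 3 * exp_latency d r pi pbar.
Proof.
move=> [dz dsym dtri] [upi allpi _] q01 p01 b1 bpq.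
have d0 : forall x y, 0 <= d x y.
  move=> x y; have := dtri x y x; rewrite (proj2 (dz x x) erefl) [d y x]dsym.
  lra.
rewrite !exp_latencyE //.
have Lp0 := Lf_ge0 d0 p01 r pi; have Hp0 := Hf_ge0 d0 p01 pi.
have Lq0 := Lf_ge0 d0 q01 r pi; have Hq0 := Hf_ge0 d0 q01 pi.
case: (leP 0 beta) => hb.
- rewrite mulrDr; apply: lerD; last exact: Hf_le.
  apply: le_trans (Lf_le d0 p01 hb b1 bpq r pi).
  apply: ler_wpM2r => //; rewrite exprS; apply: ler_piMl; [exact: exprn_ge0 | exact: b1].
- apply: le_trans (addr_ge0 Lq0 Hq0).
  apply: mulr_le0_ge0; last exact: addr_ge0.
  rewrite exprS; apply: mulr_le0_ge0; [exact: ltW hb | exact: sqr_ge0].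
Qed.
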